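(* As formal power series in $z$, $$\sum_{n\ge0}\frac{r_n(s,q^2)}{(q;q)_n}z^n=\frac{e_q(sz)\,e_q(z)}{e_{q^2}(qsz^2)}.$$ Equivalently, for every integer $n\ge0$: (i) $r_n(s,q^2)=\sum_{j=0}^{\lfloor n/2\rfloor}(-1)^jq^{j^2}(q;q^2)_j\begin{bmatrix} n\\ 2j\end{bmatrix}_q s^j\,r_{n-2j}(s,q)$; (ii) $r_n(s,q^2)=\sum_{j=0}^{\lfloor n/2\rfloor}\begin{bmatrix} n\\ 2j\end{bmatrix}_q(q;q^2)_j(qs;q^2)_j\,s^{n-2j}\Big(-\frac1s;q\Big)_{n-2j}$; (iii) $\sum_{k=0}^{2n}(-1)^k(-s;q)_k\begin{bmatrix} 2n\\ k\end{bmatrix}_q r_{2n-k}(s,q^2)=(q;q^2)_n(qs;q^2)_n$ and $\sum_{k=0}^{2n+1}(-1)^k(-s;q)_k\begin{bmatrix} 2n+1\\ k\end{bmatrix}_q r_{2n+1-k}(s,q^2)=0$.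
   Context: $q$ is an indeterminate. $(x;q)_n=\prod_{j=0}^{n-1}(1-q^jx)$. The Gaussian binomial coefficient is $\begin{bmatrix} n\\ j\end{bmatrix}_q=\frac{(q;q)_n}{(q;q)_j(q;q)_{n-j}}$ for $0\le j\le n$ and $0$ otherwise. The Rogers–Szegö polynomials are $r_n(s,q)=\sum_{j=0}^n\begin{bmatrix} n\\ j\end{bmatrix}_q s^j$. $e_q(w)=\sum_{n\ge0}\frac{w^n}{(q;q)_n}$ as a formal power series, and $1/e_q(w)$ denotes its formal reciprocal. *)

(* Defs.v *)
From HB Require Import structures.
From mathcomp Require Import all_boot all_order all_algebra.
Set Implicit Arguments. Unset Strict Implicit. Unset Printing Implicit Defensive.
Import Order.TTheory GRing.Theory Num.Theory.
Local Open Scope ring_scope.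

Section Defs.
Variable R : fieldType.

Definition qpoch (x q : R) (n : nat) : R := \prod_(j < n) (1 - q ^+ j * x).

Definition qbinom (q : R) (n j : nat) : R :=
  if (j <= n)%N then qpoch q q n / (qpoch q q j * qpoch q q (n - j)) else 0.

Definition rs (n : nat) (s q : R) : R := \sum_(j < n.+1) qbinom q n j * s ^+ j.

(* formal power series in z, as coefficient sequences *)
Definition series := nat -> R.

Definition smul (a b : series) : series :=
  fun n => \sum_(k < n.+1) a k * b (n - k)%N.

(* e_q(w) = sum_n w^n/(q;q)_n, as a series in w *)
Definition eq_series (q : R) : series := fun n => (qpoch q q n)^-1.

(* substitution w := c z^d (d > 0) into a series f in w *)
Definition subst_mono (c : R) (d : nat) (f : series) : series :=
  fun n => if (d %| n)%N then c ^+ (n %/ d) * f (n %/ d)%N else 0.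

(* formal reciprocal (for a series with invertible constant term) *)
Fixpoint recip_seq (a : series) (n : nat) : seq R :=
  match n with
  | 0 => [:: (a 0%N)^-1]
  | n'.+1 => let s := recip_seq a n' in
      rcons s (- (a 0%N)^-1 * \sum_(k < n'.+1) a k.+1 * nth 0 s (n' - k)%N)
  end.
Definition recip (a : series) : series := fun n => nth 0 (recip_seq a n) n.

End Defs.

(* The indeterminates: K = Q(q, s) as the fraction field of Q[q][s] *)
Definition K : fieldType := {fraction {poly {poly rat}}}.
Definition qI : K := tofrac (('X : {poly rat})%:P).
Definition sI : K := tofrac ('X : {poly {poly rat}}).

(* Main.v *)
Require Import Defs.
From HB Require Import structures.
From mathcomp Require Import all_boot all_order all_algebra.
From mathcomp Require Import ring zify.
From Stdlib Require Import FunctionalExtensionality.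
Import GRing.Theory.
Local Open Scope ring_scope.
Set Implicit Arguments. Unset Strict Implicit.

Section Series.
Variable R : fieldType.
Implicit Types f g h P Q : series R.

Definition delta : series R := fun n => if n == 0%N then 1 else 0.
Definition dil (x : R) f : series R := fun n => x ^+ n * f n.
Definition pser (l : seq R) : series R := fun n => nth 0 l n.
Definition tp f (N : nat) : {poly R} := \poly_(i < N.+1) f i.

Lemma smul_tp f g [N n] : (n <= N)%N -> smul f g n = (tp f N * tp g N)`_n.
Proof.
move=> le; rewrite coefM /smul; apply: eq_bigr => i _.
rewrite !coef_poly ltnS (leq_trans (leq_ord i)) // ltnS (leq_trans (leq_subr _ _)) //.
Qed.

Lemma smulC f g : smul f g = smul g f.
Proof.
apply: functional_extensionality => n.
by rewrite (smul_tp f g (leqnn n)) (smul_tp g f (leqnn n)) mulrC.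
Qed.

Lemma coefM_eql (A A2 B : {poly R}) n :
  (forall i, (i <= n)%N -> A`_i = A2`_i) -> (A * B)`_n = (A2 * B)`_n.
Proof. move=> H; rewrite !coefM; apply: eq_bigr => i _; by rewrite H // -ltnS. Qed.

Lemma smulA f g h : smul (smul f g) h = smul f (smul g h).
Proof.
apply: functional_extensionality => n.
rewrite (smul_tp _ _ (leqnn n)) (smul_tp f _ (leqnn n)).
rewrite (@coefM_eql _ (tp f n * tp g n)); last first.
  by move=> i le; rewrite coef_poly ltnS le; apply: smul_tp.
rewrite [tp f n * tp (smul g h) n]mulrC (@coefM_eql (tp (smul g h) n) (tp g n * tp h n)); last first.
  by move=> i le; rewrite coef_poly ltnS le; apply: smul_tp.
by rewrite -mulrA mulrC.
Qed.

Lemma smulACA f g h P : smul (smul f g) (smul h P) = smul (smul f h) (smul g P).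
Proof. by rewrite !smulA; congr smul; rewrite -!smulA (smulC g h). Qed.

Lemma smul0 f g : smul f g 0%N = f 0%N * g 0%N.
Proof. by rewrite /smul big_ord_recl big_ord0 addr0 subn0. Qed.

Lemma smul_pser_cons a l f n :
  smul (pser (a :: l)) f n = a * f n + (if n is n'.+1 then smul (pser l) f n' else 0).
Proof.
rewrite /smul big_ord_recl /= subn0.
case: n => [|n] /=; first by rewrite big_ord0.
by congr (_ + _).
Qed.

Lemma smul_pser_nil f n : smul (pser [::]) f n = 0.
Proof. by rewrite /smul big1 // => i _; rewrite /pser nth_nil mul0r. Qed.

Lemma smul_pser1 a f n : smul (pser [:: a]) f n = a * f n.
Proof. by rewrite smul_pser_cons; case: n => [|n]; rewrite ?smul_pser_nil addr0. Qed.

Lemma smul_delta f : smul delta f = f.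
Proof.
apply: functional_extensionality => n.
have -> : delta = pser [:: 1] by apply: functional_extensionality => -[|[|k]].
by rewrite smul_pser_cons mul1r; case: n => [|n]; rewrite ?smul_pser_nil addr0.
Qed.

Lemma dil_smul x f g : dil x (smul f g) = smul (dil x f) (dil x g).
Proof.
apply: functional_extensionality => n; rewrite /dil /smul mulr_sumr; apply: eq_bigr => i _.
by rewrite mulrACA -exprD subnKC // -ltnS.
Qed.

Lemma dil_delta x : dil x delta = delta.
Proof. by apply: functional_extensionality => -[|n]; rewrite /dil /delta /= ?expr0 ?mul1r ?mulr0. Qed.

Lemma qde_mul x P1 Q1 P2 Q2 f g :
  smul P1 (dil x f) = smul Q1 f -> smul P2 (dil x g) = smul Q2 g ->
  smul (smul P1 P2) (dil x (smul f g)) = smul (smul Q1 Q2) (smul f g).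
Proof. by move=> e1 e2; rewrite dil_smul smulACA e1 e2 smulACA. Qed.

Lemma qde_lmul x P Q S f :
  smul P (dil x f) = smul Q f -> smul (smul S P) (dil x f) = smul (smul S Q) f.
Proof. by move=> e; rewrite !smulA e. Qed.

Lemma smulS f g n : smul f g n.+1 = f 0%N * g n.+1 + \sum_(i < n.+1) f i.+1 * g (n - i)%N.
Proof. by rewrite /smul big_ord_recl subn0; congr (_ + _); apply: eq_bigr => i _; rewrite lift0 subSS. Qed.

Lemma uniq_qde x P Q f g : P 0%N = 1 -> Q 0%N = 1 ->
  (forall n, (0 < n)%N -> x ^+ n != 1) ->
  smul P (dil x f) = smul Q f -> smul P (dil x g) = smul Q g -> f 0%N = g 0%N -> f = g.
Proof.
move=> P0 Q0 hx Ef Eg fg0; apply: functional_extensionality => n.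
suff: forall k, (k <= n)%N -> f k = g k by apply.
elim: n => [|n IH] k.
  by rewrite leqn0 => /eqP ->.
rewrite leq_eqVlt => /orP [/eqP -> | ]; last by apply: IH.
have eF := congr1 (fun h => h n.+1) Ef; have eG := congr1 (fun h => h n.+1) Eg.
move: eF eG; rewrite !smulS /dil P0 Q0 !mul1r.
move=> eF eG.
have eS : \sum_(i < n.+1) P i.+1 * (x ^+ (n - i) * g (n - i)%N) =
   \sum_(i < n.+1) P i.+1 * (x ^+ (n - i) * f (n - i)%N).
  by apply: eq_bigr => i _; rewrite IH // leq_subr.
have eT : \sum_(i < n.+1) Q i.+1 * g (n - i)%N = \sum_(i < n.+1) Q i.+1 * f (n - i)%N.
  by apply: eq_bigr => i _; rewrite IH // leq_subr.
rewrite eS eT in eG.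
set S1 := \sum_(i < n.+1) P i.+1 * (x ^+ (n - i) * f (n - i)%N) in eF eG.
set T1 := \sum_(i < n.+1) Q i.+1 * f (n - i)%N in eF eG.
have hne : x ^+ n.+1 - 1 != 0 by rewrite subr_eq0 hx.
apply: (mulfI hne).
have eF2 : x ^+ n.+1 * f n.+1 = f n.+1 + T1 - S1 by rewrite -eF addrK.
have eG2 : x ^+ n.+1 * g n.+1 = g n.+1 + T1 - S1 by rewrite -eG addrK.
rewrite !mulrBl eF2 eG2; ring.
Qed.

Lemma size_recip_seq (a : series R) n : size (recip_seq a n) = n.+1.
Proof. by elim: n => [|n IH] //=; rewrite size_rcons IH. Qed.

Lemma nth_recip_seq (a : series R) n k : (k <= n)%N -> nth 0 (recip_seq a n) k = recip a k.
Proof.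
elim: n k => [|n IH] k.
  by rewrite leqn0 => /eqP ->.
rewrite leq_eqVlt => /orP [/eqP -> // | lt].
rewrite /= nth_rcons size_recip_seq lt; exact: IH.
Qed.

Lemma recipS (a : series R) n : recip a n.+1 =
  - (a 0%N)^-1 * \sum_(k < n.+1) a k.+1 * recip a (n - k)%N.
Proof.
rewrite {1}/recip /= nth_rcons size_recip_seq ltnn eqxx.
by congr (_ * _); apply: eq_bigr => i _; rewrite nth_recip_seq // ?leq_subr.
Qed.

Lemma smul_recip (a : series R) : a 0%N != 0 -> smul a (recip a) = delta.
Proof.
move=> a0; apply: functional_extensionality => -[|n].
  by rewrite smul0 /recip /= mulfV.
rewrite smulS recipS /delta /=.
by rewrite mulrA mulrN mulfV // mulN1r addNr.
Qed.

End Series.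
Arguments delta {R}.
Ltac fdone := repeat (apply/andP; split); try assumption.

Section QS.
Variable R : fieldType.
Variables q s : R.
Hypothesis hq : forall n, (0 < n)%N -> q ^+ n != 1.
Hypothesis hs : s != 0.

Local Notation p := (q ^+ 2).

Lemma qpoch0 (x b : R) : qpoch x b 0 = 1.
Proof. by rewrite /qpoch big_ord0. Qed.

Lemma qpochS (x b : R) n : qpoch x b n.+1 = qpoch x b n * (1 - b ^+ n * x).
Proof. by rewrite /qpoch big_ord_recr. Qed.

Lemma om k : (0 < k)%N -> 1 - q ^+ k != 0.
Proof. by move=> k0; rewrite subr_eq0 eq_sym hq. Qed.

Lemma qqpoch_neq0 k n : (0 < k)%N -> qpoch (q ^+ k) (q ^+ k) n != 0.
Proof.
move=> k0; elim: n => [|n IH]; first by rewrite qpoch0 oner_eq0.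
rewrite qpochS mulf_neq0 // -exprM -exprD om //; lia.
Qed.

Lemma qpoch_q n : qpoch q q n != 0.
Proof. by have := @qqpoch_neq0 1 n (ltn0Sn 0); rewrite expr1. Qed.

Lemma qpoch_p n : qpoch p p n != 0.
Proof. exact: qqpoch_neq0. Qed.

Lemma step_neq0 (b : R) n : (forall n, qpoch b b n != 0) -> 1 - b ^+ n * b != 0.
Proof. by move=> hb; have := hb n.+1; rewrite qpochS mulf_eq0 negb_or => /andP[]. Qed.

Definition es (b c : R) : series R := fun n => c ^+ n / qpoch b b n.

Lemma es_eq (b c : R) : (forall n, qpoch b b n != 0) ->
  smul delta (dil b (es b c)) = smul (pser [:: 1; - c]) (es b c).
Proof.
move=> hb; rewrite smul_delta; apply: functional_extensionality => -[|n].
  by rewrite smul_pser_cons /dil /es /= !expr0 !mul1r addr0.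
rewrite smul_pser_cons /= smul_pser1 /dil /es qpochS !exprS.
have h1 := hb n; have h2 := @step_neq0 b n hb.
field; fdone.
Qed.


Lemma rs_es (b c : R) n : (forall n, qpoch b b n != 0) ->
  rs n c b / qpoch b b n = smul (es b c) (es b 1) n.
Proof.
move=> hb; rewrite /rs /smul mulr_suml; apply: eq_bigr => i _.
rewrite /qbinom -ltnS ltn_ord /es expr1n.
have h1 := hb n; have h2 := hb i; have h3 := hb (n - i)%N.
field; fdone.
Qed.

Lemma p_pow n : (q ^+ 2) ^+ n = q ^+ n * q ^+ n.
Proof. by rewrite -exprM mulnC exprM expr2. Qed.

Lemma qpow_even m : ~~ odd m -> q ^+ m = q ^+ m./2 * q ^+ m./2.
Proof.
move=> hm; have em : m = (m./2).*2 by rewrite -{1}(odd_double_half m) (negbTE hm).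
by rewrite {1}em -mul2n exprM p_pow.
Qed.

Definition cpoch n := \prod_(j < n) (1 + q ^+ j.+1).

Lemma qpoch_pp n : qpoch p p n = qpoch q q n * cpoch n.
Proof.
elim: n => [|n IH]; first by rewrite !qpoch0 /cpoch big_ord0 mulr1.
by rewrite !qpochS /cpoch big_ord_recr /= -/(cpoch n) IH p_pow !exprS; ring.
Qed.

Lemma qpoch_2j j : qpoch q q (2 * j) = qpoch q p j * qpoch p p j.
Proof.
elim: j => [|j IH]; first by rewrite muln0 !qpoch0 mulr1.
have -> : (2 * j.+1 = (2 * j).+2)%N by rewrite mulnS.
have e2 : q ^+ (2 * j) = q ^+ j * q ^+ j by rewrite exprM p_pow.
by rewrite !qpochS IH !p_pow (exprS q (2 * j)) e2; ring.
Qed.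

Definition Fs : series R := fun n => rs n s p / qpoch q q n.
Definition Hs : series R := subst_mono (q * s) 2 (eq_series p).
Definition Hi : series R := fun n =>
  if odd n then 0 else (-1) ^+ n./2 * q ^+ (n./2 ^ 2) * s ^+ n./2 / qpoch p p n./2.
Definition Ts : series R := fun n => s ^+ n * qpoch (- s^-1) q n / qpoch q q n.
Definition Us : series R := fun n =>
  if odd n then 0 else qpoch (q * s) p n./2 / qpoch p p n./2.
Definition As : series R := fun n => (-1) ^+ n * qpoch (- s) q n / qpoch q q n.
Definition Gq : series R := smul (es q s) (es q 1).
Definition Gp : series R := smul (es p s) (es p 1).

Definition P2 : series R := pser [:: 1; 0; - (q * s)].
Definition L1 : series R := pser [:: 1; -1].
Definition Ls : series R := pser [:: 1; - s].
Definition Lp : series R := pser [:: 1; 1].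
Definition Z2 : series R := pser [:: 1; 0; -1].
Definition L3 : series R := pser [:: 1; - (1 + s); s].

Lemma LsL1 : smul Ls L1 = L3.
Proof.
apply: functional_extensionality => -[|[|[|n]]];
  rewrite /Ls /L1 /L3 smul_pser_cons /= ?smul_pser1 /pser /= ?nth_nil; ring.
Qed.

Lemma L1Ls : smul L1 Ls = L3.
Proof. by rewrite smulC LsL1. Qed.

Lemma LpL1 : smul Lp L1 = Z2.
Proof.
apply: functional_extensionality => -[|[|[|n]]];
  rewrite /Lp /L1 /Z2 smul_pser_cons /= ?smul_pser1 /pser /= ?nth_nil; ring.
Qed.

Lemma EGp : smul delta (dil p Gp) = smul L3 Gp.
Proof.
rewrite /Gp -LsL1 -(smul_delta delta); apply: qde_mul; apply: es_eq; exact: qpoch_p.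
Qed.

Lemma EGq : smul delta (dil q Gq) = smul L3 Gq.
Proof.
rewrite /Gq -LsL1 -(smul_delta delta); apply: qde_mul; apply: es_eq; exact: qpoch_q.
Qed.

Ltac expand := repeat (first [rewrite smul_pser1 | rewrite smul_pser_cons /=]); rewrite ?smul_pser_nil.

Lemma solve_top (a u v : R) : a * u = u + v -> 1 - a != 0 -> u = - v / (1 - a).
Proof.
move=> e h; apply: (mulfI h); rewrite [RHS]mulrC divfK // mulrBl mul1r e; ring.
Qed.

Lemma cpoch_neq0 n : cpoch n != 0.
Proof. by have := qpoch_p n; rewrite qpoch_pp mulf_eq0 negb_or => /andP[]. Qed.

Lemma F_Gp n : Fs n = cpoch n * Gp n.
Proof.
rewrite /Gp -rs_es; last exact: qpoch_p.
rewrite /Fs qpoch_pp; have h1 := qpoch_q n; have h2 := cpoch_neq0 n; field; fdone.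
Qed.

Lemma cpochS n : cpoch n.+1 = cpoch n * (1 + q ^+ n.+1).
Proof. by rewrite /cpoch big_ord_recr. Qed.

Lemma EF : smul P2 (dil q Fs) = smul L3 Fs.
Proof.
apply: functional_extensionality => -[|[|n]].
- by rewrite /P2 /L3 !smul_pser_cons /dil /= expr0; ring.
- rewrite /P2 /L3; expand; rewrite /dil !F_Gp.
  have e : p ^+ 1 * Gp 1 = Gp 1 + (- (1 + s) * Gp 0).
    have := congr1 (fun h => h 1%N) EGp; rewrite smul_delta /dil /L3; expand => ->; ring.
  have hne : 1 - p ^+ 1 != 0 by rewrite -exprM om.
  rewrite (solve_top e hne) !cpochS /cpoch big_ord0.
  rewrite expr1 in hne *; field; fdone.
- rewrite /P2 /L3; expand; rewrite /dil !F_Gp.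
  have e : p ^+ n.+2 * Gp n.+2 = Gp n.+2 + (- (1 + s) * Gp n.+1 + s * Gp n).
    have := congr1 (fun h => h n.+2) EGp; rewrite smul_delta /dil /L3; expand => ->; ring.
  have hne : 1 - p ^+ n.+2 != 0 by rewrite -exprM om.
  rewrite (solve_top e hne) !cpochS.
  rewrite p_pow !exprS in hne *.
  have h := cpoch_neq0 n.
  field; fdone.
Qed.

Lemma Hs_eq n : Hs n = if odd n then 0 else (q * s) ^+ n./2 / qpoch p p n./2.
Proof. by rewrite /Hs /subst_mono dvdn2 divn2 /eq_series; case: odd. Qed.

Lemma stepp h : 1 - q ^+ h * q ^+ h * q ^+ 2 != 0.
Proof. by have := step_neq0 h qpoch_p; rewrite p_pow. Qed.

Lemma EH : smul delta (dil q Hs) = smul P2 Hs.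
Proof.
rewrite smul_delta; apply: functional_extensionality => -[|[|n]];
  rewrite /P2; expand; rewrite /dil !Hs_eq /=; try (rewrite !expr0; ring).
rewrite negbK; case hn: (odd n); first ring.
rewrite !qpochS p_pow (exprS q n.+1) (exprS q n) (qpow_even (negbT hn)) (exprS (q * s)).
have h1 := qpoch_p n./2; have h2 := stepp n./2.
field; fdone.
Qed.

Lemma EHi : smul P2 (dil q Hi) = smul delta Hi.
Proof.
rewrite smul_delta; apply: functional_extensionality => -[|[|n]];
  rewrite /P2; expand; rewrite /dil /Hi /=; try (rewrite !expr0; ring).
rewrite negbK; case hn: (odd n); first ring.
have -> : (n./2.+1 ^ 2 = n./2 ^ 2 + n./2 + n./2 + 1)%N.
  by rewrite !expnS expn0; lia.
rewrite !qpochS p_pow (exprS q n.+1) (exprS q n) (qpow_even (negbT hn)) !exprD expr1 (exprS s) (exprS (-1)).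
have h1 := qpoch_p n./2; have h2 := stepp n./2.
field; fdone.
Qed.

Lemma ET : smul Lp (dil q Ts) = smul Ls Ts.
Proof.
apply: functional_extensionality => -[|n];
  rewrite /Lp /Ls; expand; rewrite /dil /Ts /=; try (rewrite !expr0; ring).
rewrite !qpochS !exprS.
have h1 := qpoch_q n; have h2 := @step_neq0 q n qpoch_q.
field; fdone.
Qed.

Lemma EU : smul P2 (dil q Us) = smul Z2 Us.
Proof.
apply: functional_extensionality => -[|[|n]];
  rewrite /P2 /Z2; expand; rewrite /dil /Us /=; try (rewrite !expr0; ring).
rewrite negbK; case hn: (odd n); first ring.
rewrite !qpochS p_pow (exprS q n.+1) (exprS q n) (qpow_even (negbT hn)).
have h1 := qpoch_p n./2; have h2 := stepp n./2.
field; fdone.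
Qed.

Lemma EA : smul Ls (dil q As) = smul Lp As.
Proof.
apply: functional_extensionality => -[|n];
  rewrite /Lp /Ls; expand; rewrite /dil /As /=; try (rewrite !expr0; ring).
rewrite !qpochS !exprS.
have h1 := qpoch_q n; have h2 := @step_neq0 q n qpoch_q.
field; fdone.
Qed.

Lemma even_sum n (G : nat -> R) :
  \sum_(k < n.+1) (if odd k then 0 else G k./2) = \sum_(j < n./2.+1) G j.
Proof.
elim: n => [|n IH]; first by rewrite !big_ord1.
rewrite big_ord_recr /= IH uphalf_half.
case: (boolP (odd n)) => hn /=.
  by rewrite add1n [in RHS]big_ord_recr.
by rewrite add0n addr0.
Qed.

Lemma even_split (h G : nat -> R) n :
  \sum_(k < n.+1) (if odd k then 0 else h k./2) * G (n - k)%N =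
  \sum_(j < n./2.+1) h j * G (n - 2 * j)%N.
Proof.
rewrite -(even_sum n (fun j => h j * G (n - 2 * j)%N)); apply: eq_bigr => k _; case: ifP => hk; first by rewrite mul0r.
by rewrite mul2n even_halfK // hk.
Qed.

Lemma rs0 (b c : R) : rs 0 c b = 1.
Proof. by rewrite /rs big_ord1 /qbinom /= !qpoch0 expr0 !mulr1 divr1. Qed.

Lemma subst_es c : subst_mono c 1 (eq_series q) = es q c.
Proof. by apply: functional_extensionality => n; rewrite /subst_mono dvd1n divn1. Qed.

Lemma Hs0 : Hs 0%N = 1.
Proof. by rewrite Hs_eq /= expr0 qpoch0 invr1 mulr1. Qed.

Lemma Fs0 : Fs 0%N = 1.
Proof. by rewrite /Fs rs0 qpoch0 invr1 mulr1. Qed.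

Lemma Gq0 : Gq 0%N = 1.
Proof. by rewrite /Gq smul0 /es !expr0 qpoch0 invr1 !mulr1. Qed.

Lemma Main : smul Fs Hs = Gq.
Proof.
apply: (@uniq_qde _ q P2 (smul L3 P2)) => //.
- by rewrite smul0 /L3 /P2 /pser /= mulr1.
- by have := qde_mul EF EH; rewrite (smulC P2 delta) smul_delta.
- by have := qde_lmul P2 EGq; rewrite (smulC P2 delta) smul_delta (smulC P2 L3).
- by rewrite smul0 Fs0 Hs0 Gq0 mulr1.
Qed.

Lemma HsHi : smul Hs Hi = delta.
Proof.
apply: (@uniq_qde _ q P2 P2) => //.
- by have := qde_mul EH EHi; rewrite smul_delta (smulC P2 delta) smul_delta.
- by rewrite dil_delta.
- by rewrite smul0 Hs0 /Hi /= !expr0 qpoch0 invr1 !mulr1.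
Qed.

Lemma Fs_Hi : Fs = smul Hi Gq.
Proof.
by rewrite -Main smulC smulA HsHi smulC smul_delta.
Qed.

Lemma LsZ2 : smul Ls Z2 = smul Lp L3.
Proof. by rewrite -L1Ls -smulA LpL1 smulC. Qed.

Lemma Fs_TU : Fs = smul Us Ts.
Proof.
rewrite smulC; apply: (@uniq_qde _ q (smul Lp P2) (smul Ls Z2)) => //.
- by rewrite smul0 /Lp /P2 /pser /= mulr1.
- by rewrite smul0 /Ls /Z2 /pser /= mulr1.
- by have := qde_lmul Lp EF; rewrite LsZ2.
- exact: qde_mul ET EU.
- by rewrite smul0 Fs0 /Ts /Us /= !expr0 !qpoch0 invr1 !mulr1.
Qed.

Lemma AF_U : smul As Fs = Us.
Proof.
apply: (@uniq_qde _ q (smul Ls P2) (smul Lp L3)) => //.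
- by rewrite smul0 /Ls /P2 /pser /= mulr1.
- by rewrite smul0 /Lp /L3 /pser /= mulr1.
- exact: qde_mul EA EF.
- by have := qde_lmul Ls EU; rewrite LsZ2.
- by rewrite smul0 Fs0 /As /Us /= !expr0 !qpoch0 invr1 !mulr1.
Qed.

Lemma part1 n : rs n s p / qpoch q q n =
  smul (smul (subst_mono s 1 (eq_series q)) (subst_mono 1 1 (eq_series q)))
       (recip (subst_mono (q * s) 2 (eq_series (q ^+ 2)))) n.
Proof.
rewrite !subst_es -[smul (es q s) (es q 1)]/Gq -[subst_mono _ 2 _]/Hs.
by rewrite -Main smulA smul_recip ?Hs0 ?oner_neq0 // smulC smul_delta.
Qed.

Lemma rsF n : rs n s p = qpoch q q n * Fs n.
Proof. by rewrite /Fs mulrC divfK // qpoch_q. Qed.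

Lemma qpoch_qp j : qpoch q p j != 0.
Proof. by have := qpoch_q (2 * j); rewrite qpoch_2j mulf_eq0 negb_or => /andP[]. Qed.

Lemma part_i n : rs n s p =
  \sum_(j < n./2.+1) (-1) ^+ j * q ^+ (j ^ 2) * qpoch q p j
        * qbinom q n (2 * j) * s ^+ j * rs (n - 2 * j) s q.
Proof.
rewrite rsF Fs_Hi /smul /Hi.
rewrite (even_split (fun j => (-1) ^+ j * q ^+ (j ^ 2) * s ^+ j / qpoch p p j)) mulr_sumr.
apply: eq_bigr => j _.
have hj : (2 * j <= n)%N by rewrite mul2n -geq_half_double -ltnS.
rewrite /Gq -rs_es; last exact: qpoch_q.
rewrite /qbinom hj qpoch_2j.
have h1 := qpoch_q n; have h2 := qpoch_q (n - 2 * j); have h3 := qpoch_qp j.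
have h4 := qpoch_p j.
field; fdone.
Qed.

Lemma part_ii n : rs n s p =
  \sum_(j < n./2.+1) qbinom q n (2 * j) * qpoch q p j
        * qpoch (q * s) p j * s ^+ (n - 2 * j) * qpoch (- s^-1) q (n - 2 * j).
Proof.
rewrite rsF Fs_TU /smul /Us.
rewrite (even_split (fun j => qpoch (q * s) p j / qpoch p p j)) mulr_sumr.
apply: eq_bigr => j _.
have hj : (2 * j <= n)%N by rewrite mul2n -geq_half_double -ltnS.
rewrite /Ts /qbinom hj qpoch_2j.
have h1 := qpoch_q n; have h2 := qpoch_q (n - 2 * j); have h3 := qpoch_qp j.
have h4 := qpoch_p j.
field; fdone.
Qed.

Lemma part_iii N : \sum_(k < N.+1) (-1) ^+ k * qpoch (- s) q k * qbinom q N k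
        * rs (N - k) s p = qpoch q q N * Us N.
Proof.
rewrite -AF_U /smul mulr_sumr; apply: eq_bigr => k _.
rewrite /As /Fs /qbinom -ltnS ltn_ord.
have h1 := qpoch_q N; have h2 := qpoch_q (N - k); have h3 := qpoch_q k.
field; fdone.
Qed.

Lemma part_iii_even n : \sum_(k < (2 * n).+1) (-1) ^+ k * qpoch (- s) q k * qbinom q (2 * n) k
        * rs (2 * n - k) s p = qpoch q p n * qpoch (q * s) p n.
Proof.
rewrite part_iii qpoch_2j /Us mul2n odd_double doubleK.
have h := qpoch_p n; field; fdone.
Qed.

Lemma part_iii_odd n : \sum_(k < (2 * n).+2) (-1) ^+ k * qpoch (- s) q k * qbinom q (2 * n).+1 k
        * rs ((2 * n).+1 - k) s p = 0.
Proof. by rewrite part_iii /Us /= mul2n odd_double /= mulr0. Qed.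
End QS.

Lemma hqI n : (0 < n)%N -> qI ^+ n != 1.
Proof.
move=> n0; rewrite /qI -tofracXn -tofrac1 tofrac_eq -rmorphXn /= -polyC1 (inj_eq polyC_inj).
apply/eqP => h; have := congr1 (fun r : {poly rat} => size r) h; rewrite size_polyXn size_poly1.
by move=> [] en; rewrite en in n0.
Qed.

Lemma hsI : sI != 0.
Proof. by rewrite /sI tofrac_eq0 polyX_eq0. Qed.

Theorem lemma1p3 :
  let q := qI in let s := sI in
  (* power series identity, coefficient of z^n *)
  (forall n : nat,
     rs n s (q ^+ 2) / qpoch q q n =
     smul (smul (subst_mono s 1 (eq_series q)) (subst_mono 1 1 (eq_series q)))
          (recip (subst_mono (q * s) 2 (eq_series (q ^+ 2)))) n)
  (* (i) *)
  /\ (forall n : nat,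
     rs n s (q ^+ 2) =
     \sum_(j < n./2.+1) (-1) ^+ j * q ^+ (j ^ 2) * qpoch q (q ^+ 2) j
        * qbinom q n (2 * j) * s ^+ j * rs (n - 2 * j) s q)
  (* (ii) *)
  /\ (forall n : nat,
     rs n s (q ^+ 2) =
     \sum_(j < n./2.+1) qbinom q n (2 * j) * qpoch q (q ^+ 2) j
        * qpoch (q * s) (q ^+ 2) j * s ^+ (n - 2 * j)
        * qpoch (- s^-1) q (n - 2 * j))
  (* (iii) *)
  /\ (forall n : nat,
     \sum_(k < (2 * n).+1) (-1) ^+ k * qpoch (- s) q k * qbinom q (2 * n) k
        * rs (2 * n - k) s (q ^+ 2)
     = qpoch q (q ^+ 2) n * qpoch (q * s) (q ^+ 2) n)
  /\ (forall n : nat,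
     \sum_(k < (2 * n).+2) (-1) ^+ k * qpoch (- s) q k * qbinom q (2 * n).+1 k
        * rs ((2 * n).+1 - k) s (q ^+ 2) = 0).
Proof.
split; [exact: (part1 hqI hsI) | split; [exact: (part_i hqI hsI) | split;
  [exact: (part_ii hqI hsI) | split; [exact: (part_iii_even hqI hsI) | exact: (part_iii_odd hqI hsI)]]]].
Qed.
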